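(* Let $K\ge1$, $\delta\in(0,1)$, and real parameters $\theta_1,\dots,\theta_K$. For each $i\in[K]$ let $E_i^+$ be an e-value with respect to $[0,\infty)$ (i.e. $E_i^+\ge0$ and $\mathbb{E}[E_i^+]\le1$ whenever $\theta_i\ge0$) and $E_i^-$ an e-value with respect to $(-\infty,0]$ (i.e. $E_i^-\ge0$ and $\mathbb{E}[E_i^-]\le1$ whenever $\theta_i\le0$), with $E_i^+=(E_i^-)^{-1}$, and set $E_i=(E_i^+\vee E_i^-)/2$. The e-values may be arbitrarily dependent across $i$. Let $E_{(1)}\ge\dots\ge E_{(K)}$ be the ordered $E_i$, let $k=\max\{k\in[K]: E_{(k)}\ge K/(\delta k)\}$ (with $k=0$ if the set is empty), and let $R$ be the set of indices of the $k$ largest $E_i$. For each $i\in R$ set $D_i=-1$ if $E_i^+\ge K/(\delta k)$ and $D_i=1$ otherwise. Then $$\mathrm{dFDR}=\mathbb{E}\left[\frac{\sum_{i\in R}\left(\mathbf 1\{D_i=1,\theta_i\le0\}+\mathbf 1\{D_i=-1,\theta_i\ge0\}\right)}{|R|\vee 1}\right]\le\delta .$$ *)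

(* Defs.v *)
From HB Require Import structures.
From mathcomp Require Import all_boot all_order all_algebra.
From mathcomp Require Import all_classical all_reals all_analysis measurable_realfun.
Set Implicit Arguments. Unset Strict Implicit. Unset Printing Implicit Defensive.
Import Order.TTheory GRing.Theory Num.Theory.
Local Open Scope ring_scope.

Section EBH.
Variables (R : realType) (K : nat) (delta : R).

Definition Ecomb (Ep Em : \bar R) : \bar R :=
  (maxe Ep Em * (2^-1)%:E)%E.

Definition thr (k : nat) : R := K%:R / (delta * k%:R).

(* ordered values E_(1) >= ... >= E_(K);  Eord E k = E_(k) for 1 <= k <= K *)
Definition Eord (E : 'I_K -> \bar R) (k : nat) : \bar R :=
  nth 0%E (sort (fun x y : \bar R => (y <= x)%E) [seq E i | i <- enum 'I_K]) k.-1.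

Definition kstar (E : 'I_K -> \bar R) : nat :=
  \max_(k < K.+1 | (0 < k)%N && ((thr k)%:E <= Eord E k)%E) k.

Definition Rset (E : 'I_K -> \bar R) : {set 'I_K} :=
  [set i | (0 < kstar E)%N && (Eord E (kstar E) <= E i)%E].

Definition Dsign (Ep : \bar R) (k : nat) : int :=
  if ((thr k)%:E <= Ep)%E then (-1)%R else 1%R.

Definition FDP (theta : 'I_K -> R) (Ep Em : 'I_K -> \bar R) : R :=
  let E := fun i => Ecomb (Ep i) (Em i) in
  let k := kstar E in
  let Rs := Rset E in
  (\sum_(i in Rs)
     ((((Dsign (Ep i) k == 1%R) && (theta i <= 0)) : nat)%:R
      + (((Dsign (Ep i) k == (-1)%R) && (0 <= theta i)) : nat)%:R))
  / (maxn #|Rs| 1)%:R.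

End EBH.

(* Main.v *)
Require Import Defs.
From HB Require Import structures.
From mathcomp Require Import all_boot all_order all_algebra.
From mathcomp Require Import all_classical all_reals all_analysis measurable_realfun.
From mathcomp Require Import ring lra.
Import Order.TTheory GRing.Theory Num.Theory.
Local Open Scope ring_scope.
Set Implicit Arguments. Unset Strict Implicit.

Definition Hf (R : realType) (t : R) (a b : \bar R) : \bar R :=
  if 0 < t then a else if t < 0 then b else Ecomb a b.

Lemma Hf_ge0 (R : realType) (t : R) (a b : \bar R) : (0 <= a)%E -> (0 <= b)%E -> (0 <= Hf t a b)%E.
Proof.
move=> a0 b0; rewrite /Hf /Ecomb; case: ifP => // _; case: ifP => // _.
apply: mule_ge0; last by rewrite lee_fin invr_ge0.
by rewrite le_max a0.
Qed.

Lemma Ecomb_le (R : realType) (a b : \bar R) : (0 <= a)%E -> (0 <= b)%E -> (Ecomb a b <= maxe a b)%E.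
Proof.
move=> a0 b0; rewrite /Ecomb.
have : (0 <= maxe a b)%E by rewrite le_max a0.
case: (maxe a b) => [r| |] //=; last first.
  by move=> _; rewrite leey.
rewrite !lee_fin => r0.
by rewrite ler_piMr // invf_le1 // ler1n.
Qed.

Lemma Hf_thr (R : realType) (t x : R) (a b : \bar R) : (0 <= a)%E -> (0 <= b)%E -> 0 <= x ->
  (x%:E <= Ecomb a b)%E ->
  (x%:E <= a -> (0 <= t)%R -> x%:E <= Hf t a b)%E /\
  (~~ (x%:E <= a) -> (t <= 0)%R -> x%:E <= Hf t a b)%E.
Proof.
move=> a0 b0 x0 xE; rewrite /Hf; split.
  move=> xa t0; case: ifP => // _; case: ifP => // tn.
  by move: (lt_le_trans tn t0); rewrite ltxx.
move=> xa t0; case: ifP => tp.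
  by move: (lt_le_trans tp t0); rewrite ltxx.
case: ifP => // _.
have := le_trans xE (Ecomb_le a0 b0).
by rewrite le_max (negbTE xa).
Qed.
Lemma card_Rge (R : realType) K (E : 'I_K -> \bar R) k : (0 < k <= K)%N ->
  (k <= #|[set i | (Eord E k <= E i)%E]|)%N.
Proof.
move=> /andP[k0 kK].
rewrite /Eord.
set s := sort _ _.
have sz : size s = K by rewrite size_sort size_map size_enum_ord.
have srt : sorted (fun x y : \bar R => (y <= x)%E) s.
  by apply: sort_sorted => x y; exact: le_total.
pose p := (fun x => (nth 0%E s k.-1 <= x)%E).
rewrite cardE /enum_mem size_filter.
have -> : count (mem [set i | (nth 0%E s k.-1 <= E i)%E]) (Finite.enum 'I_K)
   = count p s.
  rewrite /s count_sort count_map -enumT; apply: eq_count => i.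
  by rewrite /= inE.
rewrite -(cat_take_drop k s) count_cat.
have -> : count p (take k s) = k.
  rewrite -{2}(size_takel (s := s) (_ : k <= size s)%N) ?sz //.
  apply/eqP; rewrite -all_count; apply/(all_nthP 0%E) => j.
  rewrite size_takel ?sz // => jk.
  rewrite nth_take // /p.
  apply: (sorted_leq_nth _ _ _ srt).
  - by move=> x y z /= h1 h2; exact: le_trans h2 h1.
  - by move=> x /=.
  - by rewrite inE sz (leq_trans jk).
  - by rewrite inE sz prednK // (leq_trans _ kK).
  - by rewrite -ltnS prednK.
by apply: leq_addr.
Qed.
Lemma kstar_le (R : realType) K (delta : R) (E : 'I_K -> \bar R) :
  (kstar delta E <= K)%N.
Proof. by apply/bigmax_leqP => i _; rewrite -ltnS. Qed.

Lemma kstar_P (R : realType) K (delta : R) (E : 'I_K -> \bar R) :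
  (0 < kstar delta E)%N -> ((thr K delta (kstar delta E))%:E <= Eord E (kstar delta E))%E.
Proof.
rewrite /kstar.
case: (pickP (fun k : 'I_K.+1 => (0 < k)%N && ((thr K delta k)%:E <= Eord E k)%E)) => [i0 Pi0|P0].
  rewrite (@bigop.bigmax_eq_arg _ i0 _ (fun k : 'I_K.+1 => nat_of_ord k) Pi0).
  by case: arg_maxnP => // i /andP[].
by rewrite big_pred0.
Qed.

Lemma fdp_bound (R : realType) K (delta : R) (hK : (1 <= K)%N) (hd : 0 < delta)
  (theta : 'I_K -> R) (ep em : 'I_K -> \bar R)
  (ep0 : forall i, (0 <= ep i)%E) (em0 : forall i, (0 <= em i)%E) :
  ((FDP delta theta ep em)%:E <=
    \sum_(i < K) ((delta / K%:R)%:E * Hf (theta i) (ep i) (em i)))%E.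
Proof.
have H0 i : (0 <= (delta / K%:R)%:E * Hf (theta i) (ep i) (em i))%E.
  by apply: mule_ge0; [rewrite lee_fin divr_ge0 // ltW | exact: Hf_ge0].
rewrite /FDP; cbv zeta.
set E := fun i => Ecomb (ep i) (em i).
set k := kstar delta E.
have [k0|kpos] := posnP k.
  have -> : Rset delta E = finset.set0.
    by apply/finset.setP => i; rewrite /Rset !inE; move: k0; rewrite /k => ->.
  rewrite big_set0 mul0r; exact: sume_ge0.
have hthr := kstar_P kpos.
have hkK : (0 < k <= K)%N by rewrite kpos kstar_le.
have hcard := card_Rge E hkK.
have -> : Rset delta E = [set i | (Eord E k <= E i)%E].
  by apply/finset.setP => i; rewrite /Rset !inE -/k kpos.
set Rs := [set i | _].
have kR : 0 < k%:R :> R by rewrite ltr0n.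
have thr0 : 0 < thr K delta k by rewrite /thr divr_gt0 // ?ltr0n ?mulr_gt0.
set S := \sum_(i in Rs) _.
have S0 : 0 <= S by apply: sumr_ge0 => i _; apply: addr_ge0.
apply: (@le_trans _ _ (S / k%:R)%:E).
  rewrite lee_fin; apply: ler_wpM2l => //.
  rewrite lef_pV2 ?posrE ?ltr0n //.
    by rewrite ler_nat leq_max hcard.
  by rewrite leq_max orbT.
rewrite /S mulr_suml -sumEFin big_mkcond /=; apply: lee_sum => i _.
case: ifP => iR; last exact: H0 i.
have hE : ((thr K delta k)%:E <= Ecomb (ep i) (em i))%E.
  by apply: le_trans hthr _; move: iR; rewrite inE.
have [hA hB] := Hf_thr (theta i) (ep0 i) (em0 i) (ltW thr0) hE.
have key : (1 / k%:R)%:E = ((delta / K%:R)%:E * (thr K delta k)%:E)%E.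
  rewrite -EFinM /thr; congr (_%:E); field.
  by rewrite !pnatr_eq0 -!lt0n hK kpos gt_eqF.
have c0 : (0 <= (delta / K%:R)%:E)%E by rewrite lee_fin divr_ge0 // ltW.
have n1 : ((-1 : int) == 1) = false by [].
have n2 : ((1 : int) == -1) = false by [].
rewrite /Dsign; case: ifP => hep.
  have [t0|t0] := leP 0 (theta i).
    rewrite /= ?t0 ?andbT ?andbF /= add0r key.
    by apply: lee_wpmul2l => //; apply: hA.
  by rewrite n1 /= add0r mul0r; apply: H0.
have [t0|t0] := leP (theta i) 0.
  rewrite eqxx n2 /= addr0 key.
  by apply: lee_wpmul2l => //; apply: hB => //; rewrite hep.
by rewrite eqxx n2 /= addr0 mul0r; apply: H0.
Qed.

Lemma le_integral_nm d (T : measurableType d) (R : realType) (mu : {measure set T -> \bar R}) (f g : T -> \bar R) : (forall x, 0 <= f x)%E -> (forall x, f x <= g x)%E -> (\int[mu]_x f x <= \int[mu]_x g x)%E.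
Proof. move=> f0 fg. have g0 x : (0 <= g x)%E by apply: le_trans (f0 x) (fg x).
rewrite !ge0_integralTE//. apply: ereal_sup_le => _ [h hf <-]; exists h => // x; exact: le_trans (hf x) (fg x). Qed.

Unset Implicit Arguments.
Set Strict Implicit.

Theorem corollary3 (d : measure_display) (T : measurableType d) (R : realType)
  (P : probability T R) (K : nat) (hK : (1 <= K)%N) (delta : R)
  (hdelta0 : 0 < delta) (hdelta1 : delta < 1)
  (theta : 'I_K -> R) (Ep Em : 'I_K -> T -> \bar R)
  (mEp : forall i, measurable_fun setT (Ep i))
  (mEm : forall i, measurable_fun setT (Em i))
  (Ep_ge0 : forall i w, (0 <= Ep i w)%E)
  (Em_ge0 : forall i w, (0 <= Em i w)%E)
  (Ep_e : forall i, 0 <= theta i -> (\int[P]_w Ep i w <= 1)%E)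
  (Em_e : forall i, theta i <= 0 -> (\int[P]_w Em i w <= 1)%E)
  (Epm : forall i w, Ep i w = ((Em i w)^-1)%E) :
  (\int[P]_w (@FDP R K delta theta (fun i => Ep i w) (fun i => Em i w))%:E
     <= delta%:E)%E.
Proof.
pose H i w := Hf (theta i) (Ep i w) (Em i w).
have mH i : measurable_fun setT (H i).
  rewrite /H /Hf; case: (0 < theta i); first exact: mEp.
  case: (theta i < 0); first exact: mEm.
  rewrite /Ecomb; apply: emeasurable_funM; last exact: measurable_cst.
  exact: measurable_maxe.
have H0 i w : (0 <= H i w)%E by apply: Hf_ge0.
have c0 : 0 <= delta / K%:R by rewrite divr_ge0 // ltW.
have IH i : (\int[P]_w H i w <= 1)%E.
  rewrite /H /Hf; case tp: (0 < theta i); first exact: Ep_e (ltW tp).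
  case tn: (theta i < 0); first exact: Em_e (ltW tn).
  have t0 : theta i = 0 by apply/eqP; rewrite eq_le !leNgt tp tn.
  have mx : measurable_fun setT (fun w => maxe (Ep i w) (Em i w)) by exact: measurable_maxe.
  have mx0 : forall w, setT w -> (0 <= maxe (Ep i w) (Em i w))%E.
    by move=> w _; rewrite le_max Ep_ge0.
  have h0 : (0 <= (2^-1 : R)%:E)%E by rewrite lee_fin invr_ge0.
  rewrite /Ecomb (ge0_integralZr _ _ mx mx0 h0) //.
  have h2 : (\int[P]_w maxe (Ep i w) (Em i w) <= 2%:E)%E.
    apply: le_trans (@le_integral_nm _ _ _ P _ (fun w => Ep i w + Em i w)%E _ _) _.
    - by move=> w; rewrite le_max Ep_ge0.
    - by move=> w; rewrite ge_max leeDl // addeC leeDl.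
    rewrite ge0_integralD //.
    rewrite (_ : 2%:E = 1 + 1)%E; last by rewrite -EFinD.
    by apply: leeD; [apply: Ep_e | apply: Em_e]; rewrite t0.
  apply: le_trans (lee_wpmul2r _ h2) _; first by rewrite lee_fin invr_ge0.
  by rewrite -EFinM mulfV.
have FDP0 w : (0 <= (@FDP R K delta theta (fun i => Ep i w) (fun i => Em i w))%:E)%E.
  rewrite lee_fin /FDP; cbv zeta; apply: divr_ge0 => //.
  by apply: sumr_ge0 => i _; apply: addr_ge0.
have B w := @fdp_bound R K delta hK hdelta0 theta (fun i => Ep i w) (fun i => Em i w) (Ep_ge0^~ w) (Em_ge0^~ w).
apply: le_trans; first exact: (@le_integral_nm _ _ _ P _ _ FDP0 B).
have mS : forall i, measurable_fun setT (fun w => ((delta / K%:R)%:E * H i w)%E).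
  by move=> i; apply: measurable_funeM; exact: mH.
have S0 : forall i w, setT w -> (0 <= (delta / K%:R)%:E * H i w)%E.
  by move=> i w _; apply: mule_ge0 => //; apply: H0.
rewrite (ge0_integral_sum _ measurableT mS S0).
apply: (@le_trans _ _ (\sum_(i < K) (delta / K%:R)%:E)%E).
  apply: lee_sum => i _.
  rewrite (ge0_integralZl_EFin _ measurableT (fun w _ => H0 i w) (mH i) c0).
  rewrite -[X in (_ <= X)%E]mule1; apply: lee_wpmul2l; first by rewrite lee_fin.
  exact: IH.
rewrite sumEFin lee_fin sumr_const card_ord -[(delta / K%:R) *+ K]mulr_natr divfK //.
by rewrite pnatr_eq0 -lt0n.
Qed.
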